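(* Let $P,K:\mathbb{N}_0\to\mathbb{N}_0$ be a scaling such that $\lim_{n\to\infty}n^3\tau(\theta_n)=0$. Then $\lim_{n\to\infty}\mathbb{P}[T_n(\theta_n)>0]=0$.
   Context: Random key graph: for positive integers $K\le P$, $\theta=(K,P)$ and $n\ge3$, let $K_1(\theta),\dots,K_n(\theta)$ be i.i.d. random subsets of $\{1,\dots,P\}$, each uniform over the $K$-element subsets; the random key graph $\mathbb{K}(n;\theta)$ on $\{1,\dots,n\}$ has an edge between distinct $i,j$ iff $K_i(\theta)\cap K_j(\theta)\ne\emptyset$. $T_n(\theta)$ denotes the number of triangles in $\mathbb{K}(n;\theta)$. $\tau(\theta)=K^3/P^2+(K^2/P)^3$. A scaling is a pair of functions $P,K:\mathbb{N}_0\to\mathbb{N}_0$ with $1\le K_n\le P_n$ for all $n$, and $\theta_n=(K_n,P_n)$. *)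

(* Defs.v *)
From mathcomp Require Import all_boot.
From Stdlib Require Import Reals.
Set Implicit Arguments. Unset Strict Implicit. Unset Printing Implicit Defensive.

Definition key_assign (n P : nat) := {ffun 'I_n -> {set 'I_P}}.

(* f is in the support of the i.i.d. uniform distribution over K-subsets. *)
Definition valid_assign (n K P : nat) (f : key_assign n P) : bool :=
  [forall i, #|f i| == K].

Definition rkg_edge (n P : nat) (f : key_assign n P) (i j : 'I_n) : bool :=
  (i != j) && (f i :&: f j != set0).

Definition num_triangles (n P : nat) (f : key_assign n P) : nat :=
  #|[set A : {set 'I_n} | (#|A| == 3) &&
       [forall i in A, forall j in A, (i != j) ==> rkg_edge f i j]]|.

(* Number of (equally likely) valid assignments, = C(P,K)^n. *)
Definition num_valid (n K P : nat) : nat :=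
  #|[set f : key_assign n P | valid_assign K f]|.

Definition num_valid_tri (n K P : nat) : nat :=
  #|[set f : key_assign n P | valid_assign K f && (0 < num_triangles f)]|.

(* P[T_n(theta) > 0] for theta = (K,P) with K-subsets drawn uniformly and i.i.d. *)
Definition prob_triangle (n K P : nat) : R :=
  (INR (num_valid_tri n K P) / INR (num_valid n K P))%R.

Definition tau (K P : nat) : R :=
  (INR K ^ 3 / INR P ^ 2 + (INR K ^ 2 / INR P) ^ 3)%R.

(* Main.v *)
Require Import Defs.
From Stdlib Require Import Reals.
From Stdlib Require Import Lra Lia.
From mathcomp Require all_boot zify.

Module Aux.
Import all_boot zify.
Set Implicit Arguments. Unset Strict Implicit. Unset Printing Implicit Defensive.
Lemma card_ffun_prod (aT rT : finType) (H : aT -> {set rT}) :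
  #|[set f : {ffun aT -> rT} | [forall t, f t \in H t]]| = \prod_t #|H t|.
Proof.
have -> : #|[set f : {ffun aT -> rT} | [forall t, f t \in H t]]| = #|family (fun t => mem (H t))|.
  apply: eq_card => f; rewrite inE; apply/forallP/familyP => h t; exact: h.
by rewrite card_family foldrE big_map big_enum.
Qed.

Lemma card_constr (aT rT : finType) (D : pred rT) (i j k : aT) (Gi Gj Gk : pred rT) :
  i != j -> j != k -> i != k ->
  #|[set f : {ffun aT -> rT} | [forall t, D (f t)] && [&& Gi (f i), Gj (f j) & Gk (f k)]]|
   * #|[set S | D S]| ^ 3 =
  #|[set S | D S && Gi S]| * #|[set S | D S && Gj S]| * #|[set S | D S && Gk S]|
   * #|[set S | D S]| ^ #|aT|.
Proof.
move=> nij njk nik.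
have ji : (j == i) = false by rewrite eq_sym (negbTE nij).
have ki : (k == i) = false by rewrite eq_sym (negbTE nik).
have kj : (k == j) = false by rewrite eq_sym (negbTE njk).
pose H t := [set S | D S && (if t == i then Gi S else if t == j then Gj S
                              else if t == k then Gk S else true)].
have -> : #|[set f : {ffun aT -> rT} | [forall t, D (f t)] && [&& Gi (f i), Gj (f j) & Gk (f k)]]|
   = #|[set f : {ffun aT -> rT} | [forall t, f t \in H t]]|.
  apply: eq_card => f; rewrite !inE; apply/andP/forallP.
    case=> /forallP hD /and3P[hi hj hk] t; rewrite inE hD /=.
    by case: eqP => [->//|_]; case: eqP => [->//|_]; case: eqP => [->//|_].
  move=> h; split; first by apply/forallP => t; have := h t; rewrite inE => /andP[].
  have := h i; have := h j; have := h k; rewrite !inE !eqxx ji ki kj.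
  by move=> /andP[_ ->] /andP[_ ->] /andP[_ ->].
have E : forall c, c ^ #|aT| = \prod_(t : aT) c by move=> c; rewrite prod_nat_const.
rewrite card_ffun_prod E.
rewrite (bigD1 i) //= (bigD1 j) //= 1?eq_sym // (bigD1 k) /=; last by rewrite eq_sym nik eq_sym njk.
rewrite [in RHS](bigD1 i) //= [in RHS](bigD1 j) //= 1?eq_sym // [in RHS](bigD1 k) /=; last by rewrite eq_sym nik eq_sym njk.
have HH : forall t, t != i -> t != j -> t != k -> H t = [set S | D S].
  move=> t ti tj tk; apply/setP => S; rewrite !inE (negbTE ti) (negbTE tj) (negbTE tk) andbT //.
rewrite (eq_bigr (fun _ => #|[set S | D S]|)); last first.
  by move=> t /andP[/andP[ti tj] tk]; rewrite HH.
have Hi : H i = [set S | D S && Gi S] by apply/setP => S; rewrite !inE eqxx.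
have Hj : H j = [set S | D S && Gj S] by apply/setP => S; rewrite !inE eqxx ji.
have Hk : H k = [set S | D S && Gk S].
  by apply/setP => S; rewrite !inE eqxx ki kj.
rewrite Hi Hj Hk.
set Q := \prod_(_ | _) _. rewrite !expnS expn0 muln1.
set a := #|[set S | D S & Gi S]|; set b := #|[set S | D S & Gj S]|; set c := #|[set S | D S & Gk S]|; set d := #|[set S | D S]|.
clearbody a b c d Q. nia.
Qed.

Lemma cnt_sub (T : finType) K (B : {set T}) : #|B| <= K ->
  #|[set S : {set T} | (#|S| == K) && (B \subset S)]| = 'C(#|T| - #|B|, K - #|B|).
Proof.
move=> hB.
have hC : #|T| - #|B| = #|~: B| by rewrite -(cardsC B) addKn.
rewrite hC -cards_draws.
have -> : [set S : {set T} | (#|S| == K) && (B \subset S)] =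
   (fun A => A :|: B) @: [set A : {set T} | A \subset ~: B & #|A| == K - #|B|].
  apply/setP => S; rewrite inE; apply/andP/imsetP.
    case=> /eqP hS hBS; exists (S :\: B).
      rewrite inE subsetDr /= cardsD (setIidPr hBS) hS. done.
    apply/setP => x; rewrite !inE; case xB: (x \in B) => //=; rewrite ?andbT ?orbF //; by rewrite (subsetP hBS x xB).
  case=> A; rewrite inE => /andP[hA /eqP hAc] ->; split; last exact: subsetUr.
  rewrite cardsU hAc.
  have -> : A :&: B = set0.
    apply/setP => x; rewrite !inE; apply/negbTE; apply/negP => /andP[xA xB].
    by have := subsetP hA x xA; rewrite inE xB.
  rewrite cards0 subn0 subnK //.
apply: card_in_imset => A1 A2; rewrite !inE => /andP[h1 _] /andP[h2 _] e.
have: (A1 :|: B) :\: B = (A2 :|: B) :\: B by rewrite e.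
have dd : forall A : {set T}, A \subset ~: B -> (A :|: B) :\: B = A.
  move=> A hA; apply/setP => x; rewrite !inE; case xB: (x \in B) => /=.
    by apply/esym/negP => xA; have := subsetP hA x xA; rewrite inE xB.
  by rewrite orbF.
by rewrite !dd.
Qed.

Lemma X1_eq P K (x : 'I_P) : 1 <= K ->
  #|[set S : {set 'I_P} | (#|S| == K) && (x \in S)]| * P = K * 'C(P, K).
Proof.
move=> hK.
have -> : [set S : {set 'I_P} | (#|S| == K) && (x \in S)] =
          [set S : {set 'I_P} | (#|S| == K) && ([set x] \subset S)].
  by apply/setP => S; rewrite !inE sub1set.
rewrite cnt_sub cards1 ?card_ord //.
have := mul_bin_diag P (K - 1). rewrite (_ : (K - 1).+1 = K); last by lia.
rewrite (_ : P.-1 = P - 1); last by lia.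
by rewrite mulnC.
Qed.

Lemma X2_le P K (a c : 'I_P) : a != c -> K <= P ->
  #|[set S : {set 'I_P} | (#|S| == K) && ((a \in S) && (c \in S))]| * P ^ 2 <= K ^ 2 * 'C(P, K).
Proof.
move=> hac hKP.
have -> : [set S : {set 'I_P} | (#|S| == K) && ((a \in S) && (c \in S))] =
          [set S : {set 'I_P} | (#|S| == K) && ([set a; c] \subset S)].
  by apply/setP => S; rewrite !inE subUset !sub1set.
have h2 : #|[set a; c]| = 2 by rewrite cards2 hac.
have [hK|hK] := leqP 2 K; last first.
  rewrite (_ : #|_| = 0) // ; apply: eq_card0 => S; rewrite !inE.
  apply/negP => /andP[/eqP hS hsub]; have := subset_leq_card hsub; rewrite h2 hS; lia.
rewrite cnt_sub h2 ?card_ord //.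
have e1 := mul_bin_diag P (K - 1).
have e2 := mul_bin_diag (P - 1) (K - 2).
rewrite (_ : (K - 1).+1 = K) in e1; last by lia.
rewrite (_ : (K - 2).+1 = K - 1) in e2; last by lia.
rewrite (_ : P.-1 = P - 1) in e1; last by lia.
rewrite (_ : (P - 1).-1 = P - 2) in e2; last by lia.
set x := 'C(P - 2, K - 2) in e2 *.
set y := 'C(P - 1, K - 1) in e1 e2.
set C := 'C(P, K) in e1 *.
have hP : 2 <= P by lia.
have e3 : P * ((P - 1) * x) = K * ((K - 1) * C).
  by rewrite e2 mulnCA e1 mulnCA.
have : P * (P * x) * (P - 1) <= K * K * C * (P - 1).
  rewrite -!mulnA [x * (P - 1)]mulnC e3.
  have : K * (K - 1) * P <= K * K * (P - 1) by nia.
  nia.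
rewrite leq_pmul2r; last by lia.
move=> h; rewrite !expnS expn0 !muln1; nia.
Qed.


Lemma union_bound (T I : finType) (A : pred T) (Q : I -> pred T) :
  (forall f, A f -> exists t, Q t f) ->
  #|[set f | A f]| <= \sum_t #|[set f | A f && Q t f]|.
Proof.
move=> h.
rewrite -sum1_card.
have -> : \sum_t #|[set f | A f && Q t f]| = \sum_t \sum_(f | A f) (Q t f : nat).
  apply: eq_bigr => t _; rewrite -sum1dep_card big_mkcondr /=.
  by apply: eq_bigr => f _; case: (Q t f).
rewrite exchange_big /= (eq_bigl (fun f => A f)); last by move=> f; rewrite inE.
apply: leq_sum => f Af.
have [t Qt] := h f Af.
by rewrite (bigD1 t) //= Qt.
Qed.

Lemma sum_le (I : finType) (F : I -> nat) m c :
  (forall i, F i * m <= c) -> (\sum_i F i) * m <= #|I| * c.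
Proof.
move=> h; rewrite big_distrl /=.
apply: (@leq_trans (\sum_(i : I) c)); first by apply: leq_sum => i _; exact: h.
by rewrite sum_nat_const.
Qed.

Lemma tri_exists n P (f : key_assign n P) : 0 < num_triangles f ->
  exists t : 'I_n * 'I_n * 'I_n, let: (i, j, k) := t in
    [&& i != j, j != k, i != k, f i :&: f j != set0, f j :&: f k != set0 & f k :&: f i != set0].
Proof.
rewrite /num_triangles => /card_gt0P [A]; rewrite inE => /andP[/eqP h3 /forallP hA].
have : 2 < #|A| by rewrite h3.
case/card_gt2P => x [y [z [[xA yA zA] [nxy nyz nzx]]]].
exists (x, y, z).
have e : forall u v, u \in A -> v \in A -> u != v -> f u :&: f v != set0.
  move=> u v uA vA nuv; have := hA u; rewrite uA /= => /forallP /(_ v).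
  by rewrite vA nuv /= /rkg_edge nuv.
rewrite nxy nyz eq_sym nzx /= !e //.
Qed.


Definition Qk {n P : nat} (i j k : 'I_n) (u : 'I_P + 'I_P * 'I_P * 'I_P) (f : key_assign n P) : bool :=
 match u with
 | inl x => [&& x \in f i, x \in f j & x \in f k]
 | inr (a, b, c) => [&& a != b, b != c, a != c, (a \in f i) && (c \in f i),
                       (a \in f j) && (b \in f j) & (b \in f k) && (c \in f k)]
 end.

Lemma key_exists n P (f : key_assign n P) (i j k : 'I_n) :
  f i :&: f j != set0 -> f j :&: f k != set0 -> f k :&: f i != set0 ->
  exists u : 'I_P + 'I_P * 'I_P * 'I_P, Qk i j k u f.
Proof.
case/set0Pn => a; rewrite inE => /andP[ai aj].
case/set0Pn => b; rewrite inE => /andP[bj bk].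
case/set0Pn => c; rewrite inE => /andP[ck ci].
have [eab|nab] := eqVneq a b.
  by exists (inl a); rewrite /= ai aj eab bk.
have [ebc|nbc] := eqVneq b c.
  by exists (inl b); rewrite /= bj bk ebc ci.
have [eac|nac] := eqVneq a c.
  by exists (inl a); rewrite /= ai aj eac ck.
by exists (inr (a, b, c)); rewrite /= nab nbc nac ai ci aj bj bk ck.
Qed.

Lemma num_valid_eq n K P : num_valid n K P = 'C(P, K) ^ n.
Proof.
rewrite /num_valid.
have -> : [set f : key_assign n P | valid_assign K f] =
   [set f : key_assign n P | [forall t, f t \in [set S : {set 'I_P} | #|S| == K]]].
  by apply/setP => f; rewrite !inE; apply: eq_forallb => t; rewrite inE.
by rewrite card_ffun_prod card_draws card_ord prod_nat_const card_ord.
Qed.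


Lemma term_gen n K P (i j k : 'I_n) (Gi Gj Gk : pred {set 'I_P}) e M :
  i != j -> j != k -> i != k -> K <= P ->
  #|[set S : {set 'I_P} | (#|S| == K) && Gi S]| * P ^ e <= M * 'C(P, K) ->
  #|[set S : {set 'I_P} | (#|S| == K) && Gj S]| * P ^ e <= M * 'C(P, K) ->
  #|[set S : {set 'I_P} | (#|S| == K) && Gk S]| * P ^ e <= M * 'C(P, K) ->
  #|[set f : key_assign n P | valid_assign K f && [&& Gi (f i), Gj (f j) & Gk (f k)]]|
    * P ^ (3 * e) <= M ^ 3 * 'C(P, K) ^ n.
Proof.
move=> nij njk nik hKP hi hj hk.
have h := @card_constr _ _ (fun S : {set 'I_P} => #|S| == K) i j k Gi Gj Gk nij njk nik.
rewrite card_draws !card_ord in h.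
set T := #|_| in h *.
have hC : 0 < 'C(P, K) ^ 3 by rewrite expn_gt0 bin_gt0 hKP.
rewrite -(leq_pmul2r hC) mulnAC h.
set gi := #|[set S | _ && Gi S]| in hi *.
set gj := #|[set S | _ && Gj S]| in hj *.
set gk := #|[set S | _ && Gk S]| in hk *.
rewrite mulnC (mulnC 3 e) expnM.
set q := P ^ e in hi hj hk *. set r := 'C(P, K) ^ n. set c := 'C(P, K) in hi hj hk r *.
clearbody gi gj gk q r c.
have -> : (q ^ 3 * (gi * gj * gk * r)) = (gi * q) * (gj * q) * (gk * q) * r.
  rewrite !expnS expn0 muln1; nia.
have -> : M ^ 3 * r * c ^ 3 = (M * c) * (M * c) * (M * c) * r.
  rewrite !expnS expn0 !muln1; nia.
apply: leq_mul => //; apply: leq_mul => //; apply: leq_mul => //.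
Qed.


Definition Eg {n P : nat} (i j k : 'I_n) (f : key_assign n P) : bool :=
  [&& f i :&: f j != set0, f j :&: f k != set0 & f k :&: f i != set0].

Lemma term_ijk n K P (i j k : 'I_n) :
  i != j -> j != k -> i != k -> 1 <= K -> K <= P ->
  #|[set f : key_assign n P | valid_assign K f && Eg i j k f]| * P ^ 6
    <= (P ^ 4 * K ^ 3 + P ^ 3 * K ^ 6) * 'C(P, K) ^ n.
Proof.
move=> nij njk nik hK hKP.
have hU := @union_bound _ _ (fun f : key_assign n P => valid_assign K f && Eg i j k f)
              (fun u f => Qk i j k u f).
have hU' : #|[set f : key_assign n P | valid_assign K f && Eg i j k f]| <=
   \sum_u #|[set f : key_assign n P | valid_assign K f && Qk i j k u f]|.
  apply: leq_trans (hU _) _.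
    by move=> f /andP[_ /and3P[h1 h2 h3]]; apply: key_exists.
  apply: leq_sum => u _; apply: subset_leq_card; apply/subsetP => f.
  by rewrite !inE => /andP[/andP[-> _] ->].
apply: leq_trans (leq_mul hU' (leqnn (P ^ 6))) _.
rewrite big_sumType /= !mulnDl.
apply: leq_add.
  have -> : P ^ 4 * K ^ 3 * 'C(P, K) ^ n = #|'I_P| * (P ^ 3 * (K ^ 3 * 'C(P, K) ^ n)).
    rewrite card_ord; set r := _ ^ n; clearbody r; rewrite !expnS expn0; nia.
  apply: sum_le => x.
  have := @term_gen n K P i j k (fun S => x \in S) (fun S => x \in S) (fun S => x \in S) 1 K
     nij njk nik hKP.
  rewrite expn1 X1_eq // => /(_ (leqnn _) (leqnn _) (leqnn _)).
  rewrite muln1 => H.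
  rewrite (_ : 6 = 3 + 3) // expnD mulnA mulnC; apply: leq_mul => //.
have -> : P ^ 3 * K ^ 6 * 'C(P, K) ^ n = #|{: 'I_P * 'I_P * 'I_P}| * (K ^ 6 * 'C(P, K) ^ n).
  rewrite !card_prod !card_ord; set r := _ ^ n; clearbody r; rewrite !expnS expn0; nia.
apply: sum_le => -[[a b] c] /=.
have [g|g] := boolP [&& a != b, b != c & a != c]; last first.
  rewrite (_ : #|_| = 0) // ; apply: eq_card0 => f; rewrite !inE.
  apply/negP => /andP[_ /and4P[h1 h2 h3 _]]; move: g; by rewrite h1 h2 h3.
case/and3P: g => nab nbc nac.
apply: (@leq_trans (#|[set f : key_assign n P | valid_assign K f &&
   [&& (a \in f i) && (c \in f i), (a \in f j) && (b \in f j) & (b \in f k) && (c \in f k)]]| * P ^ 6)).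
  apply: leq_mul => //; apply: subset_leq_card; apply/subsetP => f.
  by rewrite !inE => /andP[-> /and4P[_ _ _ ->]].
have := @term_gen n K P i j k (fun S => (a \in S) && (c \in S)) (fun S => (a \in S) && (b \in S))
    (fun S => (b \in S) && (c \in S)) 2 (K ^ 2) nij njk nik hKP
    (@X2_le _ _ _ _ nac hKP) (@X2_le _ _ _ _ nab hKP) (@X2_le _ _ _ _ nbc hKP).
by rewrite -expnM.
Qed.


Lemma tri_bound n K P : 1 <= K -> K <= P ->
  num_valid_tri n K P * P ^ 6 <= n ^ 3 * ((P ^ 4 * K ^ 3 + P ^ 3 * K ^ 6) * 'C(P, K) ^ n).
Proof.
move=> hK hKP.
pose Q (t : 'I_n * 'I_n * 'I_n) (f : key_assign n P) :=
  let: (i, j, k) := t in [&& i != j, j != k, i != k & Eg i j k f].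
have hU := @union_bound _ _ (fun f : key_assign n P => valid_assign K f && (0 < num_triangles f)) Q.
have hU' : num_valid_tri n K P <= \sum_t #|[set f : key_assign n P |
     (valid_assign K f && (0 < num_triangles f)) && Q t f]|.
  apply: hU => f /andP[_ /tri_exists [[[i j] k] H]].
  by exists (i, j, k); rewrite /Q /Eg.
apply: leq_trans (leq_mul hU' (leqnn (P ^ 6))) _.
have -> : n ^ 3 = #|{: 'I_n * 'I_n * 'I_n}| by rewrite !card_prod !card_ord !expnS expn0 muln1 mulnA.
apply: sum_le => -[[i j] k].
have [g|g] := boolP [&& i != j, j != k & i != k]; last first.
  rewrite (_ : #|_| = 0) // ; apply: eq_card0 => f; rewrite !inE /Q.
  apply/negP => /andP[_ /and4P[h1 h2 h3 _]]; move: g; by rewrite h1 h2 h3.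
case/and3P: g => nij njk nik.
apply: leq_trans (@term_ijk _ _ _ _ _ _ nij njk nik hK hKP).
apply: leq_mul => //; apply: subset_leq_card; apply/subsetP => f.
by rewrite !inE /Q => /andP[/andP[-> _] /and4P[_ _ _ ->]].
Qed.


Open Scope R_scope.
Lemma INR_muln a b : INR (a * b)%N = INR a * INR b.
Proof. by rewrite -mult_INR. Qed.
Lemma INR_addn a b : INR (a + b)%N = INR a + INR b.
Proof. by rewrite -plus_INR. Qed.
Lemma INR_expn a k : INR (expn a k) = INR a ^ k.
Proof. elim: k => [|k IH]; first by rewrite expn0. by rewrite expnS INR_muln IH. Qed.

Lemma prob_bound n K P : le 1 K -> le K P ->
  0 <= prob_triangle n K P <= INR n ^ 3 * tau K P.
Proof.
move=> /leP hK /leP hKP.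
have hv : (0 < num_valid n K P)%N by rewrite num_valid_eq expn_gt0 bin_gt0 hKP.
have hvR : 0 < INR (num_valid n K P) by apply: lt_0_INR; apply/ltP.
have hpR : 0 < INR P by apply: lt_0_INR; apply/ltP; lia.
have hN := tri_bound n hK hKP.
rewrite -num_valid_eq in hN.
move/leP: hN => /le_INR.
rewrite !INR_muln !INR_addn !INR_muln.
set a := INR (num_valid_tri n K P) => hN.
rewrite /prob_triangle /tau.
fold a.
set v := INR (num_valid n K P) in hvR hN *.
set p := INR P in hpR hN *.
split.
  apply: Rmult_le_pos; [exact: pos_INR | left; exact: Rinv_0_lt_compat].
apply: (Rmult_le_reg_r (v * p ^ 6)).
  apply: Rmult_lt_0_compat => //; exact: pow_lt.
have -> : a / v * (v * p ^ 6) = a * p ^ 6 by field; lra.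
have -> : INR n ^ 3 * (INR K ^ 3 / p ^ 2 + (INR K ^ 2 / p) ^ 3) * (v * p ^ 6)
   = INR n ^ 3 * ((p ^ 4 * INR K ^ 3 + p ^ 3 * INR K ^ 6) * v) by field; lra.
simpl pow; rewrite !Rmult_1_r; exact: hN.
Qed.

End Aux.

Open Scope R_scope.

Theorem theorem1 (Ks Ps : nat -> nat)
  (hscal : forall n, (1 <= Ks n)%nat /\ (Ks n <= Ps n)%nat)
  (htau : Un_cv (fun n => INR n ^ 3 * tau (Ks n) (Ps n)) 0) :
  Un_cv (fun n => prob_triangle n (Ks n) (Ps n)) 0.
Proof.
intros eps heps.
destruct (htau eps heps) as [N HN].
exists N; intros n hn.
specialize (HN n hn).
destruct (hscal n) as [h1 h2].
destruct (Aux.prob_bound n h1 h2) as [hl hr].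
unfold R_dist in *; rewrite Rminus_0_r in *.
rewrite Rabs_right by lra.
pose proof (Rle_abs (INR n ^ 3 * tau (Ks n) (Ps n))). lra.
Qed.
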